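(* If $t\in[1/2,1]$, then $w_1(t,a)<w_3(t,a)$ and $w(t,a)/W(t,a)\le 24/35$ for all $a\in[(3t+2)/4,2]$.
   Context: For $(t,a)\in\mathbb R^2$ define $w_1(t,a)=(2t+3)a-(3t^2/4+t)$, $w_2(t,a)=(4t+4)a-(3t^2/2+2t+2)$, $w_3(t,a)=8ta-(3t^2+4t-4)$, $W(t,a)=[(t+2)a-(t^2/2+t)](t+2)$, and $w(t,a)=\min\{w_1(t,a),w_2(t,a),w_3(t,a)\}$. *)

(* Defs.v *)
From Stdlib Require Import Reals.
Open Scope R_scope.

Definition w1 (t a : R) : R := (2*t+3)*a - (3*t^2/4 + t).
Definition w2 (t a : R) : R := (4*t+4)*a - (3*t^2/2 + 2*t + 2).
Definition w3 (t a : R) : R := 8*t*a - (3*t^2 + 4*t - 4).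
Definition WW (t a : R) : R := ((t+2)*a - (t^2/2 + t)) * (t+2).
Definition w (t a : R) : R := Rmin (w1 t a) (Rmin (w2 t a) (w3 t a)).

(* Main.v *)
Require Import Defs.
From Stdlib Require Import Reals Lra Psatz.
Open Scope R_scope.

Lemma c1 t a : 1/2 <= t <= 1 -> (3*t+2)/4 <= a <= 2 ->
 (2*t+3)*a - (3*t^2/4 + t) <= (4*t+4)*a - (3*t^2/2 + 2*t + 2) ->
 35*((2*t+3)*a - (3*t^2/4 + t)) <= 24*(((t+2)*a - (t^2/2 + t)) * (t+2)).
Proof. intros.
assert (Hk: 0 <= 24*t^2+26*t-9) by nra.
assert (HA: 0 <= (2*t+1)*a - (3*t^2/4+t+2)) by lra.
assert (P1: 0 <= (24*t^2+26*t-9)*((2*t+1)*a - (3*t^2/4+t+2))) by (apply Rmult_le_pos; lra).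
assert (Hh: 0 <= -6*t^3 -15*t^2 +12*t +36) by nra.
assert (P2: 0 <= (t-1/2)*(-6*t^3 -15*t^2 +12*t +36)) by (apply Rmult_le_pos; lra).
assert (E: (2*t+1)*(24*(((t+2)*a - (t^2/2 + t)) * (t+2)) - 35*((2*t+3)*a - (3*t^2/4 + t)))
  = (24*t^2+26*t-9)*((2*t+1)*a - (3*t^2/4+t+2)) + (t-1/2)*(-6*t^3 -15*t^2 +12*t +36)) by field.
assert (0 <= 24*(((t+2)*a - (t^2/2 + t)) * (t+2)) - 35*((2*t+3)*a - (3*t^2/4 + t))).
{ apply (Rmult_le_reg_l (2*t+1)); [lra|]. lra. }
lra. Qed.

Lemma c2 t a : 1/2 <= t <= 1 -> (3*t+2)/4 <= a <= 2 ->
 (4*t+4)*a - (3*t^2/2 + 2*t + 2) <= (2*t+3)*a - (3*t^2/4 + t) ->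
 35*((4*t+4)*a - (3*t^2/2 + 2*t + 2)) <= 24*(((t+2)*a - (t^2/2 + t)) * (t+2)).
Proof. intros.
assert (Hk: 24*t^2-44*t-44 <= 0) by nra.
assert (HA: (2*t+1)*a - (3*t^2/4+t+2) <= 0) by lra.
assert (P1: 0 <= (24*t^2-44*t-44)*((2*t+1)*a - (3*t^2/4+t+2))) by nra.
assert (Hh: 0 <= -6*t^3 -15*t^2 +12*t +36) by nra.
assert (P2: 0 <= (t-1/2)*(-6*t^3 -15*t^2 +12*t +36)) by (apply Rmult_le_pos; lra).
assert (E: (2*t+1)*(24*(((t+2)*a - (t^2/2 + t)) * (t+2)) - 35*((4*t+4)*a - (3*t^2/2 + 2*t + 2)))
  = (24*t^2-44*t-44)*((2*t+1)*a - (3*t^2/4+t+2)) + (t-1/2)*(-6*t^3 -15*t^2 +12*t +36)) by field.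
assert (0 <= 24*(((t+2)*a - (t^2/2 + t)) * (t+2)) - 35*((4*t+4)*a - (3*t^2/2 + 2*t + 2))).
{ apply (Rmult_le_reg_l (2*t+1)); [lra|]. lra. }
lra. Qed.

Theorem lemmaA7 (t : R) :
  1/2 <= t <= 1 ->
  forall a : R, (3*t+2)/4 <= a <= 2 ->
    w1 t a < w3 t a /\ w t a / WW t a <= 24/35.
Proof.
  intros Ht a Ha. unfold w, w1, w2, w3, WW in *.
  assert (HW: 0 < ((t+2)*a - (t^2/2 + t)) * (t+2)) by (apply Rmult_lt_0_compat; nra).
  split. { nra. }
  apply (Rmult_le_reg_r (((t+2)*a - (t^2/2 + t)) * (t+2))); [exact HW|].
  unfold Rdiv. rewrite Rmult_assoc, Rinv_l by lra.
  assert (35 * Rmin ((2*t+3)*a - (3*t^2/4 + t))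
     (Rmin ((4*t+4)*a - (3*t^2/2 + 2*t + 2)) (8*t*a - (3*t^2 + 4*t - 4)))
     <= 24 * (((t+2)*a - (t^2/2 + t)) * (t+2))).
  { destruct (Rle_dec ((2*t+3)*a - (3*t^2/4 + t)) ((4*t+4)*a - (3*t^2/2 + 2*t + 2))) as [H|H].
    - pose proof (c1 t a Ht Ha H).
      pose proof (Rmin_l ((2*t+3)*a - (3*t^2/4 + t))
        (Rmin ((4*t+4)*a - (3*t^2/2 + 2*t + 2)) (8*t*a - (3*t^2 + 4*t - 4)))). lra.
    - pose proof (c2 t a Ht Ha ltac:(lra)).
      pose proof (Rmin_r ((2*t+3)*a - (3*t^2/4 + t))
        (Rmin ((4*t+4)*a - (3*t^2/2 + 2*t + 2)) (8*t*a - (3*t^2 + 4*t - 4)))).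
      pose proof (Rmin_l ((4*t+4)*a - (3*t^2/2 + 2*t + 2)) (8*t*a - (3*t^2 + 4*t - 4))).
      lra. }
  lra.
Qed.
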